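(* If $S$ is a DRC-semigroup and $p_1,\dots,p_k\in\mathbf P(S)$, then $\Theta_{p_1\cdots p_k}=\theta_{p_1}\cdots\theta_{p_k}$ and $\Delta_{p_1\cdots p_k}=\delta_{p_k}\cdots\delta_{p_1}$.
   Context: A DRC-semigroup is $(S,\cdot,D,R)$, $(S,\cdot)$ a semigroup, $D,R:S\to S$ with, for all $a,b$: $D(a)a=a$, $aR(a)=a$; $D(ab)=D(aD(b))$, $R(ab)=R(R(a)b)$; $D(ab)=D(a)D(ab)D(a)$, $R(ab)=R(b)R(ab)R(b)$; $R(D(a))=D(a)$, $D(R(a))=R(a)$. $\mathbf P(S)=\{D(a):a\in S\}$. Maps are written on the right of their arguments and composed left to right. For $p,q\in\mathbf P(S)$: $q\theta_p=R(qp)$, $q\delta_p=D(pq)$. For $a\in S$: $\Theta_a,\Delta_a:\mathbf P(S)\to\mathbf P(S)$, $p\Theta_a=R(pa)$, $p\Delta_a=D(ap)$. *)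

(* Defs.v *)
From Stdlib Require Import List.
Import ListNotations.

Record DRCSemigroup := {
  car :> Type;
  mul : car -> car -> car;
  Dop : car -> car;
  Rop : car -> car;
  mulA : forall a b c, mul a (mul b c) = mul (mul a b) c;
  D_id : forall a, mul (Dop a) a = a;
  R_id : forall a, mul a (Rop a) = a;
  D_mul : forall a b, Dop (mul a b) = Dop (mul a (Dop b));
  R_mul : forall a b, Rop (mul a b) = Rop (mul (Rop a) b);
  D_mul2 : forall a b, Dop (mul a b) = mul (mul (Dop a) (Dop (mul a b))) (Dop a);
  R_mul2 : forall a b, Rop (mul a b) = mul (mul (Rop b) (Rop (mul a b))) (Rop b);
  RD : forall a, Rop (Dop a) = Dop a;
  DR : forall a, Dop (Rop a) = Rop a
}.

Definition isProj (S : DRCSemigroup) (x : S) : Prop := exists a : S, x = Dop S a.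
Definition Proj (S : DRCSemigroup) := { x : S | isProj S x }.

Lemma D_isProj (S : DRCSemigroup) (a : S) : isProj S (Dop S a).
Proof. exists a; reflexivity. Qed.

Lemma R_isProj (S : DRCSemigroup) (a : S) : isProj S (Rop S a).
Proof. exists (Rop S a); symmetry; apply DR. Qed.

Definition mkD (S : DRCSemigroup) (a : S) : Proj S := exist _ (Dop S a) (D_isProj S a).
Definition mkR (S : DRCSemigroup) (a : S) : Proj S := exist _ (Rop S a) (R_isProj S a).

Definition theta (S : DRCSemigroup) (p : Proj S) : Proj S -> Proj S :=
  fun q => mkR S (mul S (proj1_sig q) (proj1_sig p)).
Definition delta (S : DRCSemigroup) (p : Proj S) : Proj S -> Proj S :=
  fun q => mkD S (mul S (proj1_sig p) (proj1_sig q)).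

Definition Theta (S : DRCSemigroup) (a : S) : Proj S -> Proj S :=
  fun p => mkR S (mul S (proj1_sig p) a).
Definition Delta (S : DRCSemigroup) (a : S) : Proj S -> Proj S :=
  fun p => mkD S (mul S a (proj1_sig p)).

Definition prodS (S : DRCSemigroup) (a0 : S) (l : list S) : S :=
  fold_left (mul S) l a0.

(* Maps written on the right, composed left to right:
   compL [f1; ...; fk] x = x f1 f2 ... fk  (i.e. apply f1 first). *)
Definition compL {X : Type} (fs : list (X -> X)) : X -> X :=
  fun x => fold_left (fun y f => f y) fs x.

(* Main.v *)
Require Import Defs.
From Stdlib Require Import List FunctionalExtensionality ProofIrrelevance.
Import ListNotations.

Lemma mkR_eq (S : DRCSemigroup) (t u : S) : Rop S t = Rop S u -> mkR S t = mkR S u.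
Proof. intros H; unfold mkR. apply eq_exist_uncurried. exists H. apply proof_irrelevance. Qed.
Lemma mkD_eq (S : DRCSemigroup) (t u : S) : Dop S t = Dop S u -> mkD S t = mkD S u.
Proof. intros H; unfold mkD. apply eq_exist_uncurried. exists H. apply proof_irrelevance. Qed.

Lemma ThetaL (S : DRCSemigroup) (ps : list (Proj S)) : forall (a : S) x,
  Theta S (fold_left (mul S) (map (@proj1_sig _ _) ps) a) x
  = compL (map (theta S) ps) (Theta S a x).
Proof.
  induction ps as [|p ps IH]; intros a x; simpl; [reflexivity|].
  rewrite IH. unfold compL; simpl. f_equal.
  unfold Theta, theta; simpl. apply mkR_eq.
  rewrite mulA. apply R_mul.
Qed.

Lemma DeltaL (S : DRCSemigroup) (ps : list (Proj S)) : forall (a : S) x,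
  Delta S (fold_left (mul S) (map (@proj1_sig _ _) ps) a) x
  = Delta S a (compL (rev (map (delta S) ps)) x).
Proof.
  induction ps as [|p ps IH]; intros a x; simpl; [reflexivity|].
  rewrite IH. unfold compL at 2. rewrite fold_left_app. simpl. fold (compL (rev (map (delta S) ps)) x).
  unfold Delta, delta; simpl. apply mkD_eq.
  rewrite <- mulA. apply D_mul.
Qed.

Theorem lemma8p18 (S : DRCSemigroup) (p0 : Proj S) (ps : list (Proj S)) :
  Theta S (prodS S (proj1_sig p0) (map (@proj1_sig _ _) ps))
    = compL (map (theta S) (p0 :: ps))
  /\
  Delta S (prodS S (proj1_sig p0) (map (@proj1_sig _ _) ps))
    = compL (rev (map (delta S) (p0 :: ps))).
Proof.
  split; apply functional_extensionality; intro x; unfold prodS.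
  - rewrite ThetaL. reflexivity.
  - rewrite DeltaL. simpl. unfold compL at 2. rewrite fold_left_app. reflexivity.
Qed.
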